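(* For integers $n>3$ and $k\ge1$, $F_{3,k}(n)=0$ if and only if $(k,n)\in\{(3,6),(5,6),(5,27),(9,27),(9,486)\}$. In particular $F_{3,k}$ has no positive integer root for $k>12$, and $F_{3,5}(x)=\tfrac12(x-6)(x-27)$, $F_{3,9}(x)=\tfrac12(x-27)(x-486)$.
   Context: For an integer $j\ge0$, $\binom{x}{j}=x(x-1)\cdots(x-j+1)/j!$ as a polynomial in $x$, and $\binom{x}{j}=0$ for $j<0$. For integers $s\ge1$, $k\ge1$, the Moser polynomial is $F_{s,k}(x)=\sum_{p=1}^{s}(-1)^{p-1}p^{k-1}\binom{x}{s-p}$; in particular $2F_{3,k}(x)=x^2-(2^k+1)x+2\cdot3^{k-1}$. *)

(* Defs.v *)
From HB Require Import structures.
From mathcomp Require Import all_boot all_order all_algebra.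
Set Implicit Arguments. Unset Strict Implicit. Unset Printing Implicit Defensive.
Import Order.TTheory GRing.Theory Num.Theory.
Local Open Scope ring_scope.

Definition binpoly (j : nat) : {poly rat} :=
  (j`!%:R)^-1 *: \prod_(i < j) ('X - (i%:R)%:P).

(* Moser polynomial F_{s,k}(x) = sum_{p=1}^s (-1)^(p-1) p^(k-1) binom(x, s-p).
   Since 1 <= p <= s, s - p >= 0, so the convention binom(x,j)=0 for j<0 is never used. *)
Definition moser (s k : nat) : {poly rat} :=
  \sum_(1 <= p < s.+1) ((-1) ^+ (p.-1) * (p%:R) ^+ (k.-1)) *: binpoly (s - p).

(* Main.v *)
Require Import Defs.
From mathcomp Require Import all_boot all_order all_algebra.
From mathcomp Require Import ring lra zify.
Import GRing.Theory Num.Theory.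
Local Open Scope ring_scope.

Lemma moserE k : moser 3 k.+1 =
  (2%:R)^-1 *: ('X * ('X - 1)) - (2 ^ k)%:R *: 'X + (3 ^ k)%:R *: 1.
Proof.
rewrite /moser /binpoly.
rewrite big_ltn // big_ltn // big_ltn // big_geq //.
rewrite (_ : (3 - 1)%N = 2) // (_ : (3-2)%N = 1) // subnn.
rewrite !big_ord_recr !big_ord0 /=.
rewrite !factS fact0 /= -!mul_polyC natrX.
rewrite ?muln1 ?invr1 ?expr0 ?expr1 ?expr1n ?mul1r ?mulN1r ?sqrrN ?expr1n ?mul1r ?polyC0 ?subr0 ?natrX ?polyCN ?mulr1 ?polyC1 ?mul1r ?addr0.
ring.
Qed.

Lemma evalE k (x : rat) : (moser 3 k.+1).[x] = 0 <->
  x * x + (2 * 3 ^ k)%:R = (2 ^ k.+1 + 1)%:R * x.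
Proof.
have -> : (moser 3 k.+1).[x] = 2^-1 * (x * x + (2 * 3 ^ k)%:R - (2 ^ k.+1 + 1)%:R * x).
  rewrite moserE !hornerE ?natrD ?natrM ?natrX ?exprS /=; by field.
split; intro H.
  by move/eqP: H; rewrite mulf_eq0 invr_eq0 pnatr_eq0 /= subr_eq0 => /eqP.
by rewrite H subrr mulr0.
Qed.
Lemma factor_aux (p A B C D : {poly rat}) : 2 * p = 1 -> C + D = 2 * A + 1 -> C * D = 2 * B ->
  p * ('X * ('X - 1)) - A * 'X + B * 1 = p * (('X - C) * ('X - D)).
Proof.
move=> H1 H2 H3.
apply/eqP; rewrite -subr_eq0; apply/eqP.
transitivity ((2 * p - 1) * (A * 'X - B) + p * 'X * ((C + D) - (2 * A + 1)) - p * (C * D - 2 * B)).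
  ring.
by rewrite H1 H2 H3 !subrr; ring.
Qed.

Lemma half2 : 2 * (2^-1 : rat)%:P = 1.
Proof. by rewrite -polyC_natr -polyCM mulfV // polyC1. Qed.

Lemma fac k (c d : nat) : (c + d = 2 ^ k.+1 + 1)%N -> (c * d = 2 * 3 ^ k)%N ->
  moser 3 k.+1 = (2%:R)^-1 *: (('X - (c%:R)%:P) * ('X - (d%:R)%:P)).
Proof.
move=> E1 E2.
rewrite moserE -!mul_polyC; apply: factor_aux.
- exact: half2.
- rewrite -polyCD -natrD E1 natrD !natrX exprS polyCD polyCM polyC1 ?polyC_natr.
  by [].
- rewrite -polyCM -natrM E2 natrM polyCM ?polyC_natr.
  by [].
Qed.

Lemma mos5 : moser 3 5 = (2%:R)^-1 *: (('X - (6%:R)%:P) * ('X - (27%:R)%:P)).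
Proof. by apply: fac. Qed.

Lemma mos9 : moser 3 9 = (2%:R)^-1 *: (('X - (27%:R)%:P) * ('X - (486%:R)%:P)).
Proof. by apply: fac. Qed.
Lemma lemB (j : nat) : exists w : int,
  (2 : int) ^+ (3 ^ j)%N + 1 = 3 ^+ j.+1 * w /\ ~~ (3 %| w)%Z.
Proof.
elim: j => [|j [w [Hw Hn]]].
  by exists 1; split.
set M : int := 3 ^+ j.
exists (w - 3 * M * w ^+ 2 + 3 * M ^+ 2 * w ^+ 3); split.
  have Hu : (2 : int) ^+ (3 ^ j)%N = 3 * M * w - 1.
    by apply/(addIr 1); rewrite Hw exprS /M; ring.
  rewrite expnS mulnC exprM Hu !exprS /M; ring.
apply: contra Hn => H.
have -> : w = (w - 3 * M * w ^+ 2 + 3 * M ^+ 2 * w ^+ 3)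
           - 3 * (- M * w ^+ 2 + M ^+ 2 * w ^+ 3) by ring.
by rewrite rpredB // dvdz_mulr.
Qed.

Lemma lemE (a m w : int) (t : nat) : exists q : int,
  (a + m * w) ^+ t.+1 = a ^+ t.+1 + t.+1%:R * a ^+ t * m * w + m ^+ 2 * q.
Proof.
elim: t => [|t [q Hq]].
  by exists 0; rewrite !expr1 expr0; ring.
exists (a * q + t.+1%:R * a ^+ t * w ^+ 2 + m * w * q).
rewrite exprS Hq !exprS -[t.+2]addn1 natrD; ring.
Qed.

Lemma lte_aux (j t : nat) : odd t ->
  (3 ^+ j.+2 %| (2:int) ^+ (3 ^ j * t)%N + 1)%Z -> (3 %| t)%N.
Proof.
case: t => [//|t] Ht.
have [w [Hw Hn]] := lemB j.
have [q Hq] := lemE (-1) (3 ^+ j.+1) w t.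
have Hu : (2 : int) ^+ (3 ^ j)%N = -1 + 3 ^+ j.+1 * w.
  by apply/(addIr 1); rewrite Hw; ring.
rewrite exprM Hu Hq -signr_odd -(signr_odd _ t).
have -> : odd t = false by move: Ht => /=; case: (odd t).
rewrite Ht /= expr0 expr1.
have -> : -1 + t.+1%:R * 1 * 3 ^+ j.+1 * w + (3 ^+ j.+1) ^+ 2 * q + 1
   = 3 ^+ j.+2 * (3 ^+ j * q) + 3 ^+ j.+1 * (t.+1%:R * w).
  rewrite !exprS; ring.
move=> H.
have H2 : (3 ^+ j.+1 * 3 %| 3 ^+ j.+1 * (t.+1%:R * w))%Z.
  have := rpredB H (dvdz_mulr (3 ^+ j * q) (dvdzz (3 ^+ j.+2))).
  by rewrite addrC addKr -exprSr.
rewrite dvdz_mul2l ?expf_neq0 // dvdzE abszM natz absz_nat in H2.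
rewrite Euclid_dvdM // in H2.
case/orP: H2 => H3; first by move: H3; rewrite natz absz_nat.
by move: Hn; rewrite dvdzE H3.
Qed.

Lemma lte (c k : nat) : (0 < c)%N -> (3 ^ c %| 2 ^ k + 1)%N -> (3 ^ c <= 3 * k)%N.
Proof.
move=> c0 Hd.
have H3 : (3 %| 2 ^ k + 1)%N by apply: dvdn_trans Hd; rewrite -{1}(expn1 3) dvdn_exp2l.
have ok : odd k.
  apply/negPn/negP => ek.
  have Hk : k = (k./2 * 2)%N by rewrite muln2 -[in LHS](odd_double_half k) (negbTE ek).
  move: H3; rewrite Hk mulnC expnM /dvdn -modnDml -modnXm /=.
  by rewrite exp1n.
have k0 : (0 < k)%N by rewrite lt0n; apply: contraTneq ok => ->.
have [t ct Hk] := pfactor_coprime (isT : prime 3) k0.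
move: Hk; move: (logn 3 k) => v Hk.
have t0 : (0 < t)%N by case: t ct Hk => // _ ->.
have ot : odd t by move: ok; rewrite Hk oddM => /andP[].
have [cv|vc] := leqP c v.+1.
  apply: (leq_trans (leq_pexp2l (isT : (0 < 3)%N) cv)).
  rewrite expnS leq_pmul2l // Hk.
  by rewrite leq_pmull.
exfalso.
have Hd2 : (3 ^ v.+2 %| 2 ^ k + 1)%N by apply: dvdn_trans Hd; rewrite dvdn_exp2l.
have : (3 ^+ v.+2 %| (2:int) ^+ (3 ^ v * t)%N + 1)%Z.
  have -> : (3:int) ^+ v.+2 = Posz (3 ^ v.+2) by rewrite -natz natrX.
  have -> : (2:int) ^+ (3 ^ v * t)%N + 1 = Posz (2 ^ k + 1) by rewrite Hk mulnC -natz natrD natrX.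
  by rewrite dvdzE !absz_nat.
move/(lte_aux _ _ ot).
by move: ct; rewrite prime_coprime // => /negP.
Qed.

Lemma bound k : (12 <= k)%N -> (3 * k * (2 ^ k + 1) < 3 ^ k.-1)%N.
Proof.
move=> Hk; rewrite -(subnKC Hk); elim: (k - 12)%N => [|m IH].
  by vm_compute.
rewrite addnS /=.
move: IH; set n := (12 + m)%N; rewrite /=.
have n12 : (12 <= n)%N by rewrite /n leq_addr.
have -> : (3 ^ n = 3 * 3 ^ n.-1)%N by rewrite -expnS prednK // (leq_trans _ n12).
rewrite expnS.
move: (2 ^ n)%N (3 ^ n.-1)%N => a b H.
nia.
Qed.

Definition sols : seq (nat * nat) := [:: (1,0); (2,1); (3,1); (5,3); (9,3)]%N.

Lemma fin : all (fun k => all (fun x => (3 ^ x + 2 * 3 ^ (k.-1 - x) == 2 ^ k + 1)%N ==> ((k, x) \in sols))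
   (iota 0 k)) (iota 1 11).
Proof. by vm_compute. Qed.

Lemma fin2 k x : (0 < k)%N -> (k <= 11)%N -> (x < k)%N ->
  (3 ^ x + 2 * 3 ^ (k.-1 - x) = 2 ^ k + 1)%N -> (k, x) \in sols.
Proof.
move=> k0 k11 xk E.
have := fin => /allP /(_ k).
rewrite mem_iota k0 add1n ltnS k11 => /(_ isT) /allP /(_ x).
by rewrite mem_iota add0n xk E eqxx => /(_ isT).
Qed.

Lemma core x y : (3 ^ x + 2 * 3 ^ y = 2 ^ (x + y).+1 + 1)%N -> ((x + y).+1, x) \in sols.
Proof.
move=> E.
set k := (x + y).+1 in E *.
have k0 : (0 < k)%N by [].
have Hc : (3 ^ minn x y <= 3 * k)%N.
  case c0 : (minn x y) => [|c]; first by rewrite expn0 muln_gt0.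
  apply: lte => //; rewrite -c0 -E dvdn_add //.
    by rewrite dvdn_exp2l // geq_minl.
  by rewrite dvdn_mull // dvdn_exp2l // geq_minr.
have Hm : (3 ^ maxn x y <= 2 ^ k + 1)%N.
  rewrite -E; case: (leqP x y) => Hxy.
    by rewrite mul2n -addnn addnA leq_addl.
  by rewrite leq_addr.
have H3 : (3 ^ k.-1 <= 3 * k * (2 ^ k + 1))%N.
  have -> : k.-1 = (minn x y + maxn x y)%N by rewrite addn_min_max.
  by rewrite expnD leq_mul.
have k11 : (k <= 11)%N.
  by rewrite leqNgt; apply/negP => /bound; rewrite ltnNge H3.
apply: fin2 => //; first by rewrite /k ltnS leq_addr.
by rewrite /k /= addKn.
Qed.

Lemma div23 k d : (d %| 2 * 3 ^ k)%N -> exists2 a, (a <= k)%N & (d = 3 ^ a \/ d = 2 * 3 ^ a)%N.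
Proof.
elim: k d => [|k IH] d.
  rewrite muln1 => Hd.
  have : (d <= 2)%N by apply: dvdn_leq.
  case: d Hd => [|[|[|]]] //= Hd _.
    by exists 0%N => //; left.
  by exists 0%N => //; right.
rewrite expnS mulnCA => Hd.
case H3 : (3 %| d)%N.
  have Hd' : d = (3 * (d %/ 3))%N by rewrite mulnC divnK.
  rewrite Hd' dvdn_pmul2l // in Hd.
  have [a ak [Ha|Ha]] := IH _ Hd.
    by exists a.+1 => //; left; rewrite Hd' Ha expnS.
  by exists a.+1 => //; right; rewrite Hd' Ha expnS mulnCA.
have cd : coprime d 3 by rewrite coprime_sym prime_coprime // H3.
rewrite Gauss_dvdr // in Hd.
have [a ak Ha] := IH _ Hd.
by exists a => //; apply: leqW.
Qed.

Definition natsols : seq (nat * nat) := [:: (3,6); (5,6); (5,27); (9,27); (9,486)]%N.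

Lemma nat_class k N : (3 < N)%N -> (N * N + 2 * 3 ^ k = (2 ^ k.+1 + 1) * N)%N ->
  (k.+1, N) \in natsols.
Proof.
move=> N3 E.
set S := (2 ^ k.+1 + 1)%N in E.
have N0 : (0 < N)%N by apply: leq_trans N3.
have NS : (N <= S)%N.
  by rewrite -(leq_pmul2r N0) -E leq_addr.
have EM : (N * (S - N) = 2 * 3 ^ k)%N.
  by rewrite mulnBr [(N * S)%N]mulnC -E addKn.
have ND : (N %| 2 * 3 ^ k)%N by rewrite -EM dvdn_mulr.
have [a ak [Ha|Ha]] := div23 _ _ ND.
  have EM2 : (S - N = 2 * 3 ^ (k - a))%N.
    by apply/eqP; rewrite -(eqn_pmul2l N0) EM Ha mulnCA -expnD subnKC.
  have Ec : (3 ^ a + 2 * 3 ^ (k - a) = 2 ^ (a + (k - a)).+1 + 1)%N.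
    by rewrite subnKC // -EM2 -Ha subnKC.
  have := core _ _ Ec; rewrite subnKC //.
  rewrite /sols !inE !xpair_eqE => H.
  repeat case/orP: H => H; case/andP: H => /eqP Hk /eqP Hb;
   case: Hk => Hk; subst; move: N3 => //.
have EM2 : (S - N = 3 ^ (k - a))%N.
  apply/eqP; rewrite -(eqn_pmul2l N0) EM Ha -mulnA -expnD subnKC //.
have Ec : (3 ^ (k - a) + 2 * 3 ^ a = 2 ^ ((k - a) + a).+1 + 1)%N.
  by rewrite subnK // -EM2 -Ha addnC subnKC.
have := core _ _ Ec; rewrite subnK //.
move: (subKn ak) => Ha'.
rewrite /sols !inE !xpair_eqE => H.
repeat case/orP: H => H; case/andP: H => /eqP Hk /eqP Hb;
  case: Hk => Hk; subst k; rewrite Hb in Ha'; subst; move: N3 => //.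
Qed.
Lemma memE k N : ((k, Posz N) \in [:: (3%N, 6%:Z); (5%N, 6%:Z); (5%N, 27%:Z); (9%N, 27%:Z); (9%N, 486%:Z)])
   = ((k, N) \in natsols).
Proof. by rewrite !inE. Qed.

Lemma mos3 : moser 3 3 = (2%:R)^-1 *: (('X - (3%:R)%:P) * ('X - (6%:R)%:P)).
Proof. by apply: fac. Qed.

Lemma natsols_root k N : (k, N) \in natsols -> (moser 3 k).[N%:R] = 0.
Proof.
rewrite /natsols !inE !xpair_eqE => H.
by repeat case/orP: H => H; case/andP: H => /eqP -> /eqP ->;
  rewrite ?mos3 ?mos5 ?mos9 hornerZ hornerM !hornerXsubC subrr ?mul0r ?mulr0.
Qed.

Lemma natsols_le k N : (k, N) \in natsols -> (k <= 9)%N.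
Proof.
rewrite /natsols !inE !xpair_eqE => H.
by repeat case/orP: H => H; case/andP: H => /eqP -> _.
Qed.

Lemma evalN k N : (moser 3 k.+1).[N%:R] = 0 <-> (N * N + 2 * 3 ^ k = (2 ^ k.+1 + 1) * N)%N.
Proof.
rewrite evalE -natrM -natrD -natrM.
by split => [/eqP|->]; rewrite // eqr_nat => /eqP.
Qed.

Theorem mainTheorem12 :
  (forall (k : nat) (n : int), (3 < n)%R -> (1 <= k)%N ->
     ((moser 3 k).[n%:~R] = 0 <->
      (k, n) \in [:: (3%N, 6%:Z); (5%N, 6%:Z); (5%N, 27%:Z); (9%N, 27%:Z); (9%N, 486%:Z)]))
  /\ (forall (k n : nat), (12 < k)%N -> (0 < n)%N -> (moser 3 k).[n%:R] != 0)
  /\ moser 3 5 = (2%:R)^-1 *: (('X - (6%:R)%:P) * ('X - (27%:R)%:P))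
  /\ moser 3 9 = (2%:R)^-1 *: (('X - (27%:R)%:P) * ('X - (486%:R)%:P)).
Proof.
split.
  move=> k n n3 k1.
  case: n n3 => [N|N] // N3.
  have N3' : (3 < N)%N by [].
  have -> : (Posz N)%:~R = N%:R :> rat by [].
  rewrite memE.
  split; last exact: natsols_root.
  case: k k1 => // k _.
  by move/evalN; apply: nat_class.
split; last by split; [exact: mos5 | exact: mos9].
move=> k n k12 n0 ; apply/eqP.
case: k k12 => // k k12.
move/evalN => E.
have [n3|n3] := leqP n 3.
  have B := bound k.+1 (ltnW k12).
  move: B E; rewrite /= expnS.
  move: (2 ^ k)%N (3 ^ k)%N => a b B E.
  nia.
have := natsols_le _ _ (nat_class _ _ n3 E); move: k12; lia.
Qed.
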